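(* Let $a>0$, $b\ge0$, $\eta>0$, $\alpha>0$. Let $(r_t)_{t\ge0}$ be real numbers satisfying $r_{t+1}\le r_t-\alpha\frac a2r_t^2+\alpha\frac b\eta$ for all $t\ge0$, and define $\rho_0=r_0$, $\rho_{t+1}=\rho_t-\alpha\frac a2\rho_t^2+\alpha\frac b\eta$ for $t\ge0$. If $\alpha\le\frac{1}{a\rho_t}$ (for all $t$), then $\rho_t\ge r_t$ for every $t\ge0$. *)

(* Defs.v *)
From Stdlib Require Import Reals.
Open Scope R_scope.

Fixpoint rho_seq (a b eta alpha r0 : R) (t : nat) : R :=
  match t with
  | O => r0
  | S t' => let p := rho_seq a b eta alpha r0 t' in
            p - alpha * (a / 2) * p ^ 2 + alpha * (b / eta)
  end.

(* Main.v *)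
Require Import Defs.
From Stdlib Require Import Reals Lra Psatz.
Open Scope R_scope.

Lemma aux_pos (a alpha p : R) : 0 < a -> 0 < alpha -> alpha <= 1 / (a * p) ->
  0 < p /\ alpha * a * p <= 1.
Proof.
  intros ha hal h.
  destruct (Rle_or_lt p 0) as [hp|hp].
  - exfalso.
    destruct (Req_dec p 0) as [e|ne].
    + subst p. rewrite Rmult_0_r in h. unfold Rdiv in h. rewrite Rinv_0 in h. lra.
    + assert (a * p < 0) by nra.
      assert (/ (a * p) < 0) by (apply Rinv_lt_0_compat; lra).
      unfold Rdiv in h. lra.
  - split; [exact hp|].
    assert (hap : 0 < a * p) by nra.
    apply Rmult_le_compat_r with (r := a * p) in h; [|lra].
    unfold Rdiv in h. rewrite Rmult_1_l, Rinv_l in h by lra. lra.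
Qed.

Theorem lemmaC7 (a b eta alpha : R) (r : nat -> R)
  (ha : 0 < a) (hb : 0 <= b) (heta : 0 < eta) (halpha : 0 < alpha)
  (hr : forall t : nat,
      r (S t) <= r t - alpha * (a / 2) * (r t) ^ 2 + alpha * (b / eta))
  (hstep : forall t : nat, alpha <= 1 / (a * rho_seq a b eta alpha (r 0%nat) t)) :
  forall t : nat, r t <= rho_seq a b eta alpha (r 0%nat) t.
Proof.
  induction t as [|t IH]; simpl; [lra|].
  set (p := rho_seq a b eta alpha (r 0%nat) t) in *.
  destruct (aux_pos a alpha p ha halpha (hstep t)) as [hp hap].
  specialize (hr t).
  assert (key : (p - r t) * (1 - alpha * (a/2) * p - alpha * (a/2) * r t) >= 0).
  { apply Rle_ge, Rmult_le_pos; [lra|].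
    assert (alpha * a * r t <= alpha * a * p).
    { apply Rmult_le_compat_l; [nra|lra]. }
    lra. }
  nra.
Qed.
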